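(* Let $X$ be a finite $T_0$ topological space, $\mathcal V$ a multivector field on $X$ with $X$ invariant, $\mathcal M=\{M_p\mid p\in\mathbb P\}$ a Morse predecomposition of $X$, and $\le$ an admissible preorder on $\mathbb P$. Then for every $\mathbb Q\subset\mathbb P$ the set $M_{\mathbb Q}$ is a saturated isolated invariant set. Moreover, if $\mathbb Q$ is convex with respect to $\le$, then $M_{\mathbb Q}\cap M_r=\emptyset$ for all $r\in\mathbb P\setminus\mathbb Q$.
   Context: Notation: $\operatorname{cl}$ is closure; $A\subset X$ is locally closed if $\operatorname{cl}A\setminus A$ is closed. A multivector field $\mathcal V$ on $X$ is a partition of $X$ into locally closed sets (multivectors); $[x]_{\mathcal V}$ is the multivector containing $x$. A multivector $V$ is critical if $H(\operatorname{cl}V,\operatorname{cl}V\setminus V)$ (relative singular homology) is nontrivial, regular otherwise. $A$ is $\mathcal V$-compatible if it is a union of multivectors; $\langle A\rangle_{\mathcal V}$ is the smallest locally closed $\mathcal V$-compatible set containing $A$. $\Pi_{\mathcal V}(x)=\operatorname{cl}\{x\}\cup[x]_{\mathcal V}$. A solution is a partial map $\gamma:\mathbb Z\nrightarrow X$ with domain an integer interval and $\gamma(t+1)\in\Pi_{\mathcal V}(\gamma(t))$; a path has finite domain; a full solution has domain $\mathbb Z$. $\alpha(\gamma)=\langle\bigcap_{t\le0}\gamma((-\infty,t])\rangle_{\mathcal V}$, $\omega(\gamma)=\langle\bigcap_{t\ge0}\gamma([t,\infty))\rangle_{\mathcal V}$. A full solution is essential unless $\alpha(\gamma)$ or $\omega(\gamma)$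 lies in a single regular multivector; an essential solution in $A$ has image in $A$. $\operatorname{Inv}S$ is the set of $x\in S$ with an essential solution $\gamma$ in $S$, $\gamma(0)=x$; $S$ is invariant if $\operatorname{Inv}S=S$. An invariant $S$ is isolated invariant if there is a closed $N\supset\Pi_{\mathcal V}(S)$ such that every path in $N$ with endpoints in $S$ has image in $S$. A link from $S_1$ to $S_2$ is a full solution with $\alpha(\gamma)\cap S_1\ne\emptyset\ne\omega(\gamma)\cap S_2$. A Morse predecomposition of $X$ is an indexed family $\{M_p\mid p\in\mathbb P\}$ of mutually disjoint isolated invariant subsets such that every essential solution in $X$ is a link from some $M_p$ to some $M_q$. A preorder $\le$ on $\mathbb P$ is admissible if a link from $M_p$ to $M_q$ implies $q\le p$; $\mathbb Q$ is convex w.r.t. $\le$ if $p\le r\le q$, $p,q\in\mathbb Q$ imply $r\in\mathbb Q$. An invariant $T\subset X$ is saturated if every essential solution $\gamma$ in $X$ with $\alpha(\gamma)\cup\omega(\gamma)\subset T$ has $\operatorname{im}\gamma\subset T$. $\mathbb P_C=\{p\mid M_p\cap C\ne\emptyset\}$; $\operatorname{eSol}_{\mathbb Q}(X)$ is the set of essential solutions $\gamma$ in $X$ with $\mathbb P_{\alpha(\gamma)}\cap\mathbb Q\ne\emptyset\ne\mathbb P_{\omega(\gamma)}\cap\mathbb Q$; $M_{\mathbb Q}=\bigcup\{\operatorname{im}\gamma\mid\gamma\in\operatorname{eSol}_{\mathbb Q}(X)\}$. *)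

(* Defs.v *)
From HB Require Import structures.
From mathcomp Require Import all_boot all_order all_algebra.
From mathcomp Require Import all_classical all_reals all_analysis.
From mathcomp Require Import Rstruct Rstruct_topology.
From Stdlib Require Rdefinitions.
Notation R := Rdefinitions.R.

Set Implicit Arguments.
Unset Strict Implicit.
Unset Printing Implicit Defensive.

Import Order.TTheory GRing.Theory Num.Theory.
Import numFieldNormedType.Exports.
Local Open Scope classical_set_scope.
Local Open Scope ring_scope.

Definition std_simplex (n : nat) : set 'rV[R]_n.+1 :=
  [set v | (forall i, 0 <= v ord0 i) /\ \sum_i v ord0 i = 1].
Arguments std_simplex : clear implicits.

Section SingularHomology.
Variable T : topologicalType.

Definition sing_simplex (n : nat) (s : 'rV[R]_n.+1 -> T) : Prop :=
  {within std_simplex n, continuous s}.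

Definition sing_in (n : nat) (A : set T) (s : 'rV[R]_n.+1 -> T) : Prop :=
  sing_simplex s /\ s @` std_simplex n `<=` A.

Definition same_simplex (n : nat) (s t : 'rV[R]_n.+1 -> T) : Prop :=
  forall v, std_simplex n v -> s v = t v.

Definition chain (n : nat) := seq (int * ('rV[R]_n.+1 -> T)).

Definition coef (n : nat) (c : chain n) (s : 'rV[R]_n.+1 -> T) : int :=
  \sum_(p <- c) (if `[< same_simplex p.2 s >] then p.1 else 0).

Definition chain_in (n : nat) (A : set T) (c : chain n) : Prop :=
  forall p, List.In p c -> sing_in A p.2.

Definition chain_sub (n : nat) (c d : chain n) : chain n :=
  c ++ [seq (- p.1, p.2) | p <- d].

(* i-th face map R^(n+1) -> R^(n+2) (insert a zero coordinate at i) *)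
Definition face (n : nat) (i : 'I_n.+2) (v : 'rV[R]_n.+1) : 'rV[R]_n.+2 :=
  \row_j (if unlift i j is Some k then v ord0 k else 0).

Definition boundary (n : nat) (c : chain n.+1) : chain n :=
  flatten [seq [seq (((-1) ^+ nat_of_ord i) * p.1, p.2 \o face i)
               | i : 'I_n.+2 <- enum 'I_n.+2]
           | p : int * ('rV[R]_n.+2 -> T) <- c].

(* c vanishes in the relative chain group C_n(A) / C_n(B) *)
Definition null_mod (n : nat) (B : set T) (c : chain n) : Prop :=
  forall s, sing_simplex s -> ~ (s @` std_simplex n `<=` B) -> coef c s = 0.

Definition rel_cycle (n : nat) (B : set T) : chain n -> Prop :=
  match n return chain n -> Prop with
  | 0 => fun _ => True
  | m.+1 => fun c => null_mod B (boundary c)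
  end.

Definition rel_boundary (n : nat) (A B : set T) (c : chain n) : Prop :=
  exists d : chain n.+1, chain_in A d /\ null_mod B (chain_sub c (boundary d)).

Definition rel_homology_nontrivial (A B : set T) : Prop :=
  exists (n : nat) (c : chain n),
    chain_in A c /\ rel_cycle B c /\ ~ rel_boundary A B c.

End SingularHomology.

Section Multivector.
Variable T : topologicalType.

Definition locally_closed (A : set T) : Prop := closed (closure A `\` A).

(* A multivector field is given by x |-> [x]_V, a partition of X into
   locally closed sets. *)
Definition multivector_field (V : T -> set T) : Prop :=
  (forall x, V x x) /\
  (forall x y, V x y -> V y = V x) /\
  (forall x, locally_closed (V x)).

Variable V : T -> set T.

Definition critical (W : set T) : Prop :=
  rel_homology_nontrivial (closure W) (closure W `\` W).

Definition regular (W : set T) : Prop := ~ critical W.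

Definition compatible (A : set T) : Prop := forall x, A x -> V x `<=` A.

Definition lc_hull (A : set T) : set T :=
  \bigcap_(B in [set B | locally_closed B /\ compatible B /\ A `<=` B]) B.

Definition Pi (x : T) : set T := closure [set x] `|` V x.

Definition PiS (S : set T) : set T := \bigcup_(x in S) Pi x.

Definition full_solution (g : int -> T) : Prop :=
  forall t : int, Pi (g t) (g (t + 1)).

Definition alpha (g : int -> T) : set T :=
  lc_hull (\bigcap_(t in [set t : int | t <= 0]) (g @` [set s | s <= t])).

Definition omega (g : int -> T) : set T :=
  lc_hull (\bigcap_(t in [set t : int | 0 <= t]) (g @` [set s | t <= s])).

Definition in_regular_multivector (A : set T) : Prop :=
  exists x, regular (V x) /\ A `<=` V x.

Definition essential (g : int -> T) : Prop :=
  full_solution g /\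
  ~ in_regular_multivector (alpha g) /\ ~ in_regular_multivector (omega g).

Definition essential_in (A : set T) (g : int -> T) : Prop :=
  essential g /\ range g `<=` A.

Definition Inv (S : set T) : set T :=
  [set x | S x /\ exists g, essential_in S g /\ g 0 = x].

Definition is_invariant (S : set T) : Prop := Inv S = S.

Definition path_on (a b : int) (g : int -> T) : Prop :=
  a <= b /\ forall t, a <= t -> t < b -> Pi (g t) (g (t + 1)).

Definition isolated_invariant (S : set T) : Prop :=
  is_invariant S /\
  exists N : set T, closed N /\ PiS S `<=` N /\
    forall (a b : int) (g : int -> T), path_on a b g ->
      (forall t, a <= t -> t <= b -> N (g t)) ->
      S (g a) -> S (g b) ->
      forall t, a <= t -> t <= b -> S (g t).

Definition link (S1 S2 : set T) (g : int -> T) : Prop :=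
  full_solution g /\ alpha g `&` S1 !=set0 /\ omega g `&` S2 !=set0.

Definition morse_predecomposition (P : Type) (M : P -> set T) : Prop :=
  (forall p q, p <> q -> M p `&` M q = set0) /\
  (forall p, isolated_invariant (M p)) /\
  (forall g, essential_in setT g -> exists p q, link (M p) (M q) g).

Definition admissible (P : Type) (M : P -> set T) (le : P -> P -> Prop) : Prop :=
  (forall p, le p p) /\ (forall p q r, le p q -> le q r -> le p r) /\
  (forall p q g, link (M p) (M q) g -> le q p).

Definition saturated (S : set T) : Prop :=
  is_invariant S /\
  forall g, essential_in setT g -> alpha g `|` omega g `<=` S -> range g `<=` S.

Definition PC (P : Type) (M : P -> set T) (C : set T) : set P :=
  [set p | M p `&` C !=set0].

Definition eSol (P : Type) (M : P -> set T) (Q : set P) : set (int -> T) :=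
  [set g | essential_in setT g /\ PC M (alpha g) `&` Q !=set0 /\
           PC M (omega g) `&` Q !=set0].

Definition MQ (P : Type) (M : P -> set T) (Q : set P) : set T :=
  \bigcup_(g in eSol M Q) range g.

End Multivector.

Definition convex_wrt (P : Type) (le : P -> P -> Prop) (Q : set P) : Prop :=
  forall p q r, Q p -> Q q -> le p r -> le r q -> Q r.

(* Main.v *)
Require Import Defs.
From mathcomp Require Import all_boot all_order all_algebra.
From mathcomp Require Import all_classical all_reals all_analysis.
From mathcomp Require Import zify.
Local Open Scope classical_set_scope.

Section Helpers.
Import Order.TTheory GRing.Theory Num.Theory.
Local Open Scope ring_scope.
Context {T : topologicalType}.
Context {V : T -> set T}.

Lemma bw_eq (g h : int -> T) (c t0 : int) :
  (forall s, s <= t0 -> h s = g (s + c)) -> alpha V h = alpha V g.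
Proof.
move=> E; rewrite /alpha; congr lc_hull; apply/seteqP; split => x Hx t /= Ht.
- have [|s /= Hs <-] := Hx (Num.min (t - c) (Num.min t0 0)); first by rewrite /=; lia.
  exists (s + c); first by rewrite /=; lia.
  by rewrite E //=; lia.
- have [|s /= Hs <-] := Hx (Num.min (t + c) (Num.min (t0 + c) 0)); first by rewrite /=; lia.
  exists (s - c); first by rewrite /=; lia.
  by rewrite E /=; [congr g; lia | lia].
Qed.

Lemma fw_eq (g h : int -> T) (c t0 : int) :
  (forall s, t0 <= s -> h s = g (s + c)) -> omega V h = omega V g.
Proof.
move=> E; rewrite /omega; congr lc_hull; apply/seteqP; split => x Hx t /= Ht.
- have [|s /= Hs <-] := Hx (Num.max (t - c) (Num.max t0 0)); first by rewrite /=; lia.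
  exists (s + c); first by rewrite /=; lia.
  by rewrite E //=; lia.
- have [|s /= Hs <-] := Hx (Num.max (t + c) (Num.max (t0 + c) 0)); first by rewrite /=; lia.
  exists (s - c); first by rewrite /=; lia.
  by rewrite E /=; [congr g; lia | lia].
Qed.

Definition glue (g1 : int -> T) (c1 a : int) (g : int -> T) (b : int)
  (g2 : int -> T) (c2 : int) : int -> T :=
  fun s => if s <= a then g1 (s - a + c1)
           else if s <= b then g s else g2 (s - b + c2).

Lemma glue_props g1 c1 a g b g2 c2 :
  full_solution V g1 -> full_solution V g2 -> path_on V a b g ->
  g a = g1 c1 -> g b = g2 c2 ->
  let h := glue g1 c1 a g b g2 c2 in
  [/\ full_solution V h, (forall t, a <= t -> t <= b -> h t = g t),
      alpha V h = alpha V g1 & omega V h = omega V g2].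
Proof.
move=> F1 F2 [ab Pg] Ea Eb h; split.
- move=> t; rewrite /h /glue.
  case: (lerP t a) => ta.
  + case: (lerP (t + 1) a) => t1a.
    * have -> : t + 1 - a + c1 = (t - a + c1) + 1 by lia.
      exact: F1.
    * have -> : t = a by lia.
      rewrite subrr add0r -Ea.
      case: (lerP (a + 1) b) => a1b.
      -- by apply: Pg; lia.
      -- have abe : a = b by lia.
         rewrite -abe in Eb; rewrite Eb.
         have -> : a + 1 - b + c2 = c2 + 1 by lia.
         exact: F2.
  + have -> : (t + 1 <= a) = false by apply/negbTE; rewrite -ltNge; lia.
    case: (lerP t b) => tb.
    * case: (lerP (t + 1) b) => t1b.
      -- by apply: Pg; lia.
      -- have -> : t = b by lia.
         rewrite Eb; have -> : b + 1 - b + c2 = c2 + 1 by lia.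
         exact: F2.
    * have -> : (t + 1 <= b) = false by apply/negbTE; rewrite -ltNge; lia.
      have -> : t + 1 - b + c2 = (t - b + c2) + 1 by lia.
      exact: F2.
- move=> t ta tb; rewrite /h /glue.
  case: (lerP t a) => ta'.
  + have -> : t = a by lia.
    by rewrite subrr add0r Ea.
  + by rewrite tb.
- apply: (@bw_eq _ _ (c1 - a) a) => s sa.
  by rewrite /h /glue sa; congr g1; lia.
- apply: (@fw_eq _ _ (c2 - b) b) => s sb.
  rewrite /h /glue.
  case: (lerP s a) => sa.
  + have sab : s = a by lia.
    have sbb : s = b by lia.
    rewrite sab subrr add0r -Ea; rewrite -sbb sab in Eb *.
    by rewrite Eb; congr g2; lia.
  + case: (lerP s b) => sb'.
    * have -> : s = b by lia.
      by rewrite Eb; congr g2; lia.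
    * by congr g2; lia.
Qed.

Lemma glue_range g1 c1 a g b g2 c2 :
  range (glue g1 c1 a g b g2 c2) `<=`
  range g1 `|` [set g t | t in [set t | a <= t <= b]] `|` range g2.
Proof.
move=> _ [s _ <-]; rewrite /glue.
case: (lerP s a) => sa; first by left; left; exists (s - a + c1).
case: (lerP s b) => sb; last by right; exists (s - b + c2).
by left; right; exists s => //=; apply/andP; split; lia.
Qed.

Lemma rec_bw (Tfin : finite_set (@setT T)) (g : int -> T) :
  exists x, forall t, exists2 s, s <= t & g s = x.
Proof.
apply: contrapT => NH.
have H : forall x, exists t, forall s, s <= t -> g s <> x.
  move=> x; apply: contrapT => Nx; apply: NH; exists x => t.
  apply: contrapT => Nt; apply: Nx; exists t => s st gs; apply: Nt.
  by exists s.
have [f Hf] : exists f : T -> int, forall x s, s <= f x -> g s <> x.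
  by have [f Hf] := choice H; exists f.
have [l El] := (finite_seqP setT).1 Tfin.
have : exists m, forall x, x \in l -> m <= f x.
  elim: l {El} => [|y l [m Hm]]; first by exists 0.
  exists (Num.min m (f y)) => x; rewrite in_cons => /orP[/eqP ->|xl].
  - by rewrite ge_min lexx orbT.
  - by rewrite ge_min Hm.
move=> [m Hm]; apply: (Hf (g m) m) => //; apply: Hm.
have : [set` l] (g m) by rewrite -El.
by [].
Qed.

Lemma rec_fw (Tfin : finite_set (@setT T)) (g : int -> T) :
  exists x, forall t, exists2 s, t <= s & g s = x.
Proof.
have [x Hx] := rec_bw Tfin (fun s => g (- s)); exists x => t.
have [s Hs <-] := Hx (- t); exists (- s) => //; lia.
Qed.

Lemma lc_hull_sub (A : set T) : A `<=` lc_hull V A.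
Proof. by move=> x Ax B [_ [_ AB]]; exact: AB. Qed.

Lemma esol_full {P : Type} {M : P -> set T} {Q : set P} {g} :
  eSol V M Q g -> full_solution V g.
Proof. by move=> [[[F _] _] _]. Qed.

Lemma esol_of {P : Type} {M : P -> set T} {Q : set P} {g1 g2 h} :
  eSol V M Q g1 -> eSol V M Q g2 -> full_solution V h ->
  alpha V h = alpha V g1 -> omega V h = omega V g2 -> eSol V M Q h.
Proof.
move=> [[[_ [A1 _]] _] [P1 _]] [[[_ [_ O2]] _] [_ O2']] F Ea Eo.
split; first by split=> //; split=> //; rewrite Ea Eo.
by rewrite Ea Eo.
Qed.

End Helpers.

Import Order.TTheory GRing.Theory Num.Theory.

Theorem lemma4p12 (T : topologicalType)
  (Tfin : finite_set (@setT T)) (T0 : kolmogorov_space T)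
  (V : T -> set T) (HV : multivector_field V)
  (Xinv : is_invariant V setT)
  (P : Type) (M : P -> set T) (HM : morse_predecomposition V M)
  (le : P -> P -> Prop) (Hle : admissible V M le) :
  forall Q : set P,
    (saturated V (MQ V M Q) /\ isolated_invariant V (MQ V M Q)) /\
    (convex_wrt le Q -> forall r, ~ Q r -> MQ V M Q `&` M r = set0).
Proof.
move=> Q.
have Hinv : is_invariant V (MQ V M Q).
  apply/seteqP; split; first by move=> x [].
  move=> _ [g Hg [t _ <-]]; split; first by exists g => //; exists t.
  exists (fun s => g (s + t)%R); split; last by rewrite add0r.
  have F := esol_full Hg.
  have Eh : eSol V M Q (fun s => g (s + t)%R).
    apply: (esol_of Hg Hg).
    - by move=> s; rewrite -addrA (addrC 1%R) addrA; exact: F.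
    - exact: (@bw_eq T V g _ t 0%R).
    - exact: (@fw_eq T V g _ t 0%R).
  by split; [case: Eh => [[]] | move=> _ [s _ <-]; exists g => //; exists (s + t)%R].
split; [split|].
- split=> // g Hg Hsub _ [t _ <-].
  have Fg : full_solution V g by case: Hg => [[]].
  have [x Hx] := rec_bw Tfin g.
  have [y Hy] := rec_fw Tfin g.
  have [[g1 E1 [c1 _ Ex]] [g2 E2 [c2 _ Ey]]] : MQ V M Q x /\ MQ V M Q y.
    split; apply: Hsub.
    + left; apply: lc_hull_sub => t' _; have [s Hs <-] := Hx t'.
      by exists s.
    + right; apply: lc_hull_sub => t' _; have [s Hs <-] := Hy t'.
      by exists s.
  have [u Hu Eu] := Hx (t - 1)%R.
  have [v Hv Ev] := Hy (t + 1)%R.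
  have Hp : path_on V u v g by split; [lia | move=> s _ _; exact: Fg].
  have [Fh Eh Ah Oh] := glue_props _ _ _ _ _ _ _ (esol_full E1) (esol_full E2) Hp
     (etrans Eu (esym Ex)) (etrans Ev (esym Ey)).
  exists (glue g1 c1 u g v g2 c2); first exact: (esol_of E1 E2 Fh Ah Oh).
  by exists t => //; apply: Eh; lia.
- split=> //; exists setT; split; first exact: closedT.
  split=> // a b g Hp _ [g1 E1 [c1 _ Ea]] [g2 E2 [c2 _ Eb]] t ta tb.
  have [Fh Eh Ah Oh] := glue_props _ _ _ _ _ _ _ (esol_full E1) (esol_full E2) Hp
     (esym Ea) (esym Eb).
  exists (glue g1 c1 a g b g2 c2); first exact: (esol_of E1 E2 Fh Ah Oh).
  by exists t => //; apply: Eh.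
- move=> Hconv r Hr; apply/seteqP; split => // _ [[g Hg [t _ <-]] Mx].
  have Hrinv := (HM.2.1 r).1.
  rewrite -Hrinv in Mx; case: Mx => _ [rho [[Erho Rrho] E0]].
  have Frho : full_solution V rho by case: Erho.
  have Fg := esol_full Hg.
  case: Hg => _ [[p [[z [Mpz Az]] Qp]] [q [[w [Mqw Ow]] Qq]]].
  have [y Hy] := rec_fw Tfin rho.
  have [y' Hy'] := rec_bw Tfin rho.
  have Oy : omega V rho y.
    apply: lc_hull_sub => t' _; have [s Hs <-] := Hy t'; by exists s.
  have Ay : alpha V rho y'.
    apply: lc_hull_sub => t' _; have [s Hs <-] := Hy' t'; by exists s.
  have Mry : M r y by have [s Hs <-] := Hy 0%R; apply: Rrho; exists s.
  have Mry' : M r y' by have [s Hs <-] := Hy' 0%R; apply: Rrho; exists s.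
  have Ptt : path_on V t t g by split=> // s ? ?; lia.
  have P00 : path_on V 0%R 0%R rho by split=> // s ? ?; lia.
  have [F1 _ A1 O1] := glue_props _ _ _ _ _ _ _ Fg Frho Ptt erefl (esym E0).
  have [F2 _ A2 O2] := glue_props _ _ _ _ _ _ _ Frho Fg P00 erefl E0.
  have l1 : le r p.
    apply: (Hle.2.2 p r (glue g t t g t rho 0%R)); split=> //.
    by rewrite A1 O1; split; [exists z | exists y].
  have l2 : le q r.
    apply: (Hle.2.2 r q (glue rho 0%R 0%R rho 0%R g t)); split=> //.
    by rewrite A2 O2; split; [exists y' | exists w].
  by case: Hr; exact: (Hconv q p r Qq Qp l2 l1).
Qed.
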